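(* Let $A_1,B_1,A_2,B_2$ be groups with $A_1\cap B_1=A_2\cap B_2=\{1\}$. If $\mathcal{F}(A_1)\equiv\mathcal{F}(A_2)$ and $\mathcal{F}(B_1)\equiv\mathcal{F}(B_2)$ (with respect to the language of groups), then the free products $A_1*B_1$ and $A_2*B_2$ are existentially equivalent in the language of groups.
   Context: The language of groups has a constant $1$, a binary function $\cdot$ and a unary function $^{-1}$. For structures $\mathcal{M},\mathcal{N}$ in a language $\mathcal{L}$, an $\mathcal{L}$-isomorphism between subsets $S\subseteq M$, $T\subseteq N$ is a bijection $\phi:S\to T$ such that $\phi$ and $\phi^{-1}$ preserve constants lying in the set, preserve relations on tuples from the set, and satisfy $\phi(f(s_1,\dots,s_n))=f(\phi(s_1),\dots,\phi(s_n))$ whenever $s_i\in S$ and $f(s_1,\dots,s_n)\in S$ (and symmetrically for $\phi^{-1}$). $\mathcal{F}(\mathcal{M})\equiv\mathcal{F}(\mathcal{N})$ means that there is a bijection $\theta$ between the sets of $\mathcal{L}$-isomorphism classes of finite subsets of $M$ and of $N$ with $S\cong_\mathcal{L}T$ whenever $\theta([S])=[T]$; equivalently every finite subset of either structure is $\mathcal{L}$-isomorphic to a finite subset of the other. Existential equivalence means satisfying the same existential sentences. *)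

(* Defs.v *)
From Stdlib Require Import List Arith.
Import ListNotations.

Record Group := {
  carrier :> Type;
  gmul : carrier -> carrier -> carrier;
  ginv : carrier -> carrier;
  gone : carrier;
  gmul_assoc : forall x y z, gmul x (gmul y z) = gmul (gmul x y) z;
  gmul_1l : forall x, gmul gone x = x;
  gmul_1r : forall x, gmul x gone = x;
  gmul_Vl : forall x, gmul (ginv x) x = gone;
  gmul_Vr : forall x, gmul x (ginv x) = gone
}.

Arguments gmul {g} _ _.
Arguments ginv {g} _.
Arguments gone {g}.

Definition is_hom (G H : Group) (f : G -> H) : Prop :=
  forall x y : G, f (gmul x y) = gmul (f x) (f y).

Definition IsFreeProduct (A B P : Group) (iA : A -> P) (iB : B -> P) : Prop :=
  is_hom A P iA /\ is_hom B P iB /\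
  forall (H : Group) (f : A -> H) (g : B -> H),
    is_hom A H f -> is_hom B H g ->
    exists h : P -> H,
      (is_hom P H h /\ (forall a, h (iA a) = f a) /\ (forall b, h (iB b) = g b)) /\
      (forall h' : P -> H,
          is_hom P H h' -> (forall a, h' (iA a) = f a) -> (forall b, h' (iB b) = g b) ->
          forall x, h' x = h x).

(** A finite subset S of M is given by a list
    [s] enumerating it (repetitions allowed); the map s_i |-> t_i is an
    L-isomorphism S -> T iff it is well defined and bijective, and it and its
    inverse preserve the constant 1, and the graphs of · and ^-1 restricted to
    the sets. *)
Definition PartIso (M N : Group) (s : list M) (t : list N) : Prop :=
  length s = length t /\
  forall i j k, i < length s -> j < length s -> k < length s ->
    (nth_error s i = nth_error s j <-> nth_error t i = nth_error t j) /\
    (nth_error s i = Some gone <-> nth_error t i = Some gone) /\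
    (option_map ginv (nth_error s i) = nth_error s j <->
       option_map ginv (nth_error t i) = nth_error t j) /\
    ((match nth_error s i, nth_error s j with
      | Some x, Some y => Some (gmul x y) | _, _ => None end) = nth_error s k <->
     (match nth_error t i, nth_error t j with
      | Some x, Some y => Some (gmul x y) | _, _ => None end) = nth_error t k).

Definition FinEmbeds (M N : Group) : Prop :=
  forall s : list M, exists t : list N, PartIso M N s t.

Definition FEquiv (M N : Group) : Prop := FinEmbeds M N /\ FinEmbeds N M.

Inductive term : Type :=
| TVar : nat -> term
| TOne : term
| TMul : term -> term -> term
| TInv : term -> term.

Inductive qf : Type :=
| QEq : term -> term -> qf
| QNot : qf -> qf
| QAnd : qf -> qf -> qf
| QOr : qf -> qf -> qf.

Fixpoint eval_term (G : Group) (e : nat -> G) (t : term) : G :=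
  match t with
  | TVar n => e n
  | TOne => gone
  | TMul a b => gmul (eval_term G e a) (eval_term G e b)
  | TInv a => ginv (eval_term G e a)
  end.

Fixpoint sat_qf (G : Group) (e : nat -> G) (f : qf) : Prop :=
  match f with
  | QEq a b => eval_term G e a = eval_term G e b
  | QNot g => ~ sat_qf G e g
  | QAnd g h => sat_qf G e g /\ sat_qf G e h
  | QOr g h => sat_qf G e g \/ sat_qf G e h
  end.

(** The existential sentence ∃x̄ φ (all variables of φ existentially closed)
    holds in G. *)
Definition sat_ex (G : Group) (f : qf) : Prop := exists e : nat -> G, sat_qf G e f.

Definition ExEquiv (M N : Group) : Prop := forall f : qf, sat_ex M f <-> sat_ex N f.

(* Main.v *)
Require Import Defs.
From Stdlib Require Import List Arith Classical ClassicalEpsilon FunctionalExtensionality ProofIrrelevance.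
Import ListNotations.

Lemma mul_cancel_l (G : Group) (a x y : G) : gmul a x = gmul a y -> x = y.
Proof.
  intro H. rewrite <- (gmul_1l G x), <- (gmul_1l G y), <- (gmul_Vl G a).
  rewrite <- !gmul_assoc, H. reflexivity.
Qed.

Lemma inv_unique (G : Group) (x y : G) : gmul x y = gone -> y = ginv x.
Proof.
  intro H. apply (mul_cancel_l G x). rewrite H, gmul_Vr. reflexivity.
Qed.

Lemma inv_inv (G : Group) (x : G) : ginv (ginv x) = x.
Proof. symmetry. apply inv_unique. apply gmul_Vl. Qed.

Lemma inv_mul (G : Group) (x y : G) : ginv (gmul x y) = gmul (ginv y) (ginv x).
Proof.
  symmetry. apply inv_unique.
  rewrite <- gmul_assoc, (gmul_assoc G y), gmul_Vr, gmul_1l, gmul_Vr. reflexivity.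
Qed.

Lemma inv_one (G : Group) : ginv (@gone G) = gone.
Proof. symmetry. apply inv_unique. apply gmul_1l. Qed.

Lemma mul_inv_one (G : Group) (x y : G) : gmul x (ginv y) = gone <-> x = y.
Proof.
  split; intro H.
  - apply inv_unique in H. rewrite <- (inv_inv G x), <- H, inv_inv. reflexivity.
  - subst. apply gmul_Vr.
Qed.

Lemma hom_one (G H : Group) (f : G -> H) : is_hom G H f -> f gone = gone.
Proof.
  intro Hf. apply (mul_cancel_l H (f gone)). rewrite <- Hf, !gmul_1r. reflexivity.
Qed.

Lemma hom_inv (G H : Group) (f : G -> H) : is_hom G H f -> forall x, f (ginv x) = ginv (f x).
Proof.
  intros Hf x. apply inv_unique. rewrite <- Hf, gmul_Vr. apply hom_one; auto.
Qed.

Lemma sig_ext {X : Type} {P : X -> Prop} (x y : {z | P z}) : proj1_sig x = proj1_sig y -> x = y.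
Proof.
  destruct x, y; simpl; intro; subst. f_equal. apply proof_irrelevance.
Qed.

Record Perm (X : Type) := { pf : X -> X; pg : X -> X;
  pfg : forall x, pf (pg x) = x; pgf : forall x, pg (pf x) = x }.
Arguments pf {X} _ _.
Arguments pg {X} _ _.
Arguments pfg {X} _ _.
Arguments pgf {X} _ _.

Lemma perm_ext {X} (p q : Perm X) : (forall x, pf p x = pf q x) -> p = q.
Proof.
  intro H.
  assert (Hg : forall x, pg p x = pg q x).
  { intro x. rewrite <- (pfg q x) at 1. rewrite <- H, pgf. reflexivity. }
  destruct p as [f1 g1 a1 b1], q as [f2 g2 a2 b2]; simpl in *.
  apply functional_extensionality in H. apply functional_extensionality in Hg. subst.
  f_equal; apply proof_irrelevance.
Qed.

Definition pmul {X} (p q : Perm X) : Perm X.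
Proof.
  refine {| pf := fun x => pf p (pf q x); pg := fun x => pg q (pg p x) |}.
  - intro x. rewrite pfg, pfg. reflexivity.
  - intro x. rewrite pgf, pgf. reflexivity.
Defined.

Definition pinv {X} (p : Perm X) : Perm X :=
  {| pf := pg p; pg := pf p; pfg := pgf p; pgf := pfg p |}.

Definition pid X : Perm X := {| pf := fun x => x; pg := fun x => x;
  pfg := fun x => eq_refl; pgf := fun x => eq_refl |}.

Definition Sym (X : Type) : Group.
Proof.
  refine {| carrier := Perm X; gmul := pmul; ginv := pinv; gone := pid X |};
  intros; apply perm_ext; intros; simpl; auto using pfg, pgf.
Defined.

Section Words.
Variables A B : Group.

Definition letter := (A + B)%type.

Definition act (l : letter) (w : list letter) : list letter :=
  match l with
  | inl a => match w with
             | inl a' :: w' => if excluded_middle_informative (gmul a a' = gone)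
                               then w' else inl (gmul a a') :: w'
             | _ => if excluded_middle_informative (a = gone) then w else inl a :: w
             end
  | inr b => match w with
             | inr b' :: w' => if excluded_middle_informative (gmul b b' = gone)
                               then w' else inr (gmul b b') :: w'
             | _ => if excluded_middle_informative (b = gone) then w else inr b :: w
             end
  end.

Definition red (u : list letter) : list letter := fold_right act [] u.

Definition notA (w : list letter) : Prop :=
  match w with inl _ :: _ => False | _ => True end.
Definition notB (w : list letter) : Prop :=
  match w with inr _ :: _ => False | _ => True end.

Fixpoint reduced (w : list letter) : Prop :=
  match w with
  | [] => True
  | inl a :: w' => a <> gone /\ reduced w' /\ notA w'
  | inr b :: w' => b <> gone /\ reduced w' /\ notB w'
  end.

Ltac dem := repeat match goal with |- context [excluded_middle_informative ?P] =>
  destruct (excluded_middle_informative P) end.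

Lemma act_reduced l w : reduced w -> reduced (act l w).
Proof.
  destruct l as [a|b]; destruct w as [|[a'|b'] w']; simpl; intros; dem; simpl; tauto.
Qed.

Lemma act_one_A w : reduced w -> act (inl gone) w = w.
Proof.
  destruct w as [|[a'|b'] w']; simpl; intros; dem; rewrite ?gmul_1l in *; try tauto; try congruence; try reflexivity.
Qed.

Lemma act_one_B w : reduced w -> act (inr gone) w = w.
Proof.
  destruct w as [|[a'|b'] w']; simpl; intros; dem; rewrite ?gmul_1l in *; try tauto; try congruence; try reflexivity.
Qed.

Lemma act_mul_A a b w : reduced w -> act (inl (gmul a b)) w = act (inl a) (act (inl b) w).
Proof.
  destruct w as [|[a'|b'] w']; simpl; intros Hr.
  - dem; subst; rewrite ?gmul_1r in *; simpl; dem; try congruence; reflexivity.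
  - destruct Hr as (H1 & H2 & H3).
    destruct (excluded_middle_informative (gmul b a' = gone)) as [e|n].
    + rewrite <- gmul_assoc, e, gmul_1r.
      destruct w' as [|[x|y] w'']; simpl in *; try tauto; dem; try reflexivity.
    + simpl. rewrite <- gmul_assoc. dem; try reflexivity.
  - destruct (excluded_middle_informative (b = gone)) as [e|n].
    + subst. rewrite gmul_1r. reflexivity.
    + simpl. dem; try reflexivity.
Qed.

Lemma act_mul_B a b w : reduced w -> act (inr (gmul a b)) w = act (inr a) (act (inr b) w).
Proof.
  destruct w as [|[a'|b'] w']; simpl; intros Hr.
  - dem; subst; rewrite ?gmul_1r in *; simpl; dem; try congruence; reflexivity.
  - destruct (excluded_middle_informative (b = gone)) as [e|n].
    + subst. rewrite gmul_1r. reflexivity.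
    + simpl. dem; try reflexivity.
  - destruct Hr as (H1 & H2 & H3).
    destruct (excluded_middle_informative (gmul b b' = gone)) as [e|n].
    + rewrite <- gmul_assoc, e, gmul_1r.
      destruct w' as [|[x|y] w'']; simpl in *; try tauto; dem; try reflexivity.
    + simpl. rewrite <- gmul_assoc. dem; try reflexivity.
Qed.

Lemma red_reduced u : reduced (red u).
Proof. induction u; simpl; [exact I | auto using act_reduced]. Qed.

End Words.

Section FP.
Variables A B P : Group.
Variable iA : A -> P.
Variable iB : B -> P.

Definition ev1 (l : letter A B) : P := match l with inl a => iA a | inr b => iB b end.
Definition evw (w : list (letter A B)) : P := fold_right (fun l acc => gmul (ev1 l) acc) gone w.

Definition invl (l : letter A B) : letter A B :=
  match l with inl a => inl (ginv a) | inr b => inr (ginv b) end.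
Fixpoint invw (w : list (letter A B)) : list (letter A B) :=
  match w with [] => [] | l :: w' => invw w' ++ [invl l] end.

Lemma evw_app u v : evw (u ++ v) = gmul (evw u) (evw v).
Proof.
  induction u; simpl. - rewrite gmul_1l; auto. - rewrite IHu, gmul_assoc. auto.
Qed.

Hypothesis HP : IsFreeProduct A B P iA iB.

Lemma iA_hom : is_hom A P iA. Proof. apply HP. Qed.
Lemma iB_hom : is_hom B P iB. Proof. apply HP. Qed.

Lemma evw_invw u : evw (invw u) = ginv (evw u).
Proof.
  induction u; simpl.
  - rewrite inv_one; auto.
  - rewrite evw_app, IHu, inv_mul. simpl. rewrite gmul_1r. f_equal.
    destruct a; simpl; apply hom_inv; auto using iA_hom, iB_hom.
Qed.

Lemma evw_act l w : evw (act A B l w) = gmul (ev1 l) (evw w).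
Proof.
  pose proof iA_hom as HA. pose proof iB_hom as HB.
  destruct l as [a|b]; destruct w as [|[a'|b'] w']; simpl;
  repeat match goal with |- context [excluded_middle_informative ?P] =>
    destruct (excluded_middle_informative P) end; simpl;
  try (subst; rewrite ?(hom_one _ _ _ HA), ?(hom_one _ _ _ HB), ?gmul_1l; reflexivity).
  - rewrite gmul_assoc, <- HA, e, hom_one, gmul_1l; auto.
  - rewrite gmul_assoc, <- HA; auto.
  - rewrite gmul_assoc, <- HB, e, hom_one, gmul_1l; auto.
  - rewrite gmul_assoc, <- HB; auto.
Qed.

Lemma evw_red u : evw (red A B u) = evw u.
Proof.
  induction u; simpl; auto. unfold red in *. simpl. rewrite evw_act, IHu. auto.
Qed.

Definition RW := {w : list (letter A B) | reduced A B w}.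

Definition actRW (l : letter A B) (w : RW) : RW :=
  exist _ (act A B l (proj1_sig w)) (act_reduced A B l _ (proj2_sig w)).

Definition permA (a : A) : Sym RW.
Proof.
  refine {| pf := actRW (inl a); pg := actRW (inl (ginv a)) |}; intro x; apply sig_ext; unfold actRW; cbn [proj1_sig pf pg].
  - rewrite <- act_mul_A, gmul_Vr, act_one_A; auto;
    first [apply proj2_sig | apply act_reduced, proj2_sig].
  - rewrite <- act_mul_A, gmul_Vl, act_one_A; auto;
    first [apply proj2_sig | apply act_reduced, proj2_sig].
Defined.

Definition permB (b : B) : Sym RW.
Proof.
  refine {| pf := actRW (inr b); pg := actRW (inr (ginv b)) |}; intro x; apply sig_ext; unfold actRW; cbn [proj1_sig pf pg].
  - rewrite <- act_mul_B, gmul_Vr, act_one_B; auto;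
    first [apply proj2_sig | apply act_reduced, proj2_sig].
  - rewrite <- act_mul_B, gmul_Vl, act_one_B; auto;
    first [apply proj2_sig | apply act_reduced, proj2_sig].
Defined.

Lemma permA_hom : is_hom A (Sym RW) permA.
Proof.
  intros x y. apply perm_ext. intro w. apply sig_ext.
  cbn [Sym gmul pmul permA pf actRW proj1_sig]. apply act_mul_A, proj2_sig.
Qed.

Lemma permB_hom : is_hom B (Sym RW) permB.
Proof.
  intros x y. apply perm_ext. intro w. apply sig_ext.
  cbn [Sym gmul pmul permB pf actRW proj1_sig]. apply act_mul_B, proj2_sig.
Qed.

Lemma normal_form u : evw u = gone <-> red A B u = [].
Proof.
  split.
  - intro Hu.
    destruct HP as (_ & _ & U).
    destruct (U (Sym RW) permA permB permA_hom permB_hom) as [h [[Hh [HhA HhB]] _]].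
    assert (Key : forall u (w : RW), proj1_sig (pf (h (evw u)) w) = fold_right (act A B) (proj1_sig w) u).
    { induction u0 as [|l u0 IH]; intro w; simpl.
      - rewrite (hom_one _ _ _ Hh). reflexivity.
      - rewrite Hh. simpl. destruct l; simpl; [rewrite HhA | rewrite HhB]; simpl; rewrite IH; auto. }
    pose proof (Key u (exist _ [] I)) as K. rewrite Hu, (hom_one _ _ _ Hh) in K. simpl in K.
    unfold red. auto.
  - intro H. rewrite <- evw_red, H. reflexivity.
Qed.

Definition inQ (x : P) : Prop := exists u, evw u = x.

Definition Qg : Group.
Proof.
  refine {| carrier := {x | inQ x};
            gmul := fun x y => exist _ (gmul (proj1_sig x) (proj1_sig y)) _;
            ginv := fun x => exist _ (ginv (proj1_sig x)) _;
            gone := exist _ gone _ |}.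
  Unshelve.
  all: try (intros; apply sig_ext; simpl).
  - apply gmul_assoc.
  - apply gmul_1l.
  - apply gmul_1r.
  - apply gmul_Vl.
  - apply gmul_Vr.
  - destruct x as [x [u Hu]], y as [y [v Hv]]. exists (u ++ v). rewrite evw_app; simpl; congruence.
  - destruct x as [x [u Hu]]. exists (invw u). rewrite evw_invw; simpl; congruence.
  - exists []. reflexivity.
Defined.

Lemma generation (x : P) : exists u, evw u = x.
Proof.
  destruct HP as (HA & HB & U).
  assert (fA_in : forall a, inQ (iA a)) by (intro a; exists [inl a]; simpl; apply gmul_1r).
  assert (fB_in : forall b, inQ (iB b)) by (intro b; exists [inr b]; simpl; apply gmul_1r).
  pose (fA := fun a => (exist _ (iA a) (fA_in a) : Qg)).
  pose (fB := fun b => (exist _ (iB b) (fB_in b) : Qg)).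
  assert (HfA : is_hom A Qg fA) by (intros a b; apply sig_ext; simpl; apply HA).
  assert (HfB : is_hom B Qg fB) by (intros a b; apply sig_ext; simpl; apply HB).
  destruct (U Qg fA fB HfA HfB) as [h [[Hh [HhA HhB]] _]].
  destruct (U P iA iB HA HB) as [h0 [_ Uniq]].
  assert (E1 : forall y, y = h0 y) by (apply Uniq; auto; intros ? ?; reflexivity).
  assert (E2 : forall y, proj1_sig (h y) = h0 y).
  { apply (Uniq (fun y => proj1_sig (h y))).
    - intros a b. rewrite Hh. reflexivity.
    - intro a. rewrite HhA. reflexivity.
    - intro b. rewrite HhB. reflexivity. }
  assert (Ex : proj1_sig (h x) = x) by (rewrite E2; symmetry; apply E1).
  rewrite <- Ex. exact (proj2_sig (h x)).
Qed.

End FP.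

Section Transfer.
Variables A B A' B' : Group.
Variable phiA : A -> A'.
Variable phiB : B -> B'.
Variable SA : A -> Prop.
Variable SB : B -> Prop.
Hypothesis HA1 : forall a, SA a -> (a = gone <-> phiA a = gone).
Hypothesis HB1 : forall b, SB b -> (b = gone <-> phiB b = gone).
Hypothesis HA2 : forall a a' c, SA a -> SA a' -> SA c -> gmul a a' = c -> gmul (phiA a) (phiA a') = phiA c.
Hypothesis HB2 : forall a a' c, SB a -> SB a' -> SB c -> gmul a a' = c -> gmul (phiB a) (phiB a') = phiB c.
Hypothesis HA3 : SA gone.
Hypothesis HB3 : SB gone.

Definition phil (l : letter A B) : letter A' B' :=
  match l with inl a => inl (phiA a) | inr b => inr (phiB b) end.
Definition phiw (w : list (letter A B)) := map phil w.
Definition inS (l : letter A B) : Prop := match l with inl a => SA a | inr b => SB b end.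
Definition allS (w : list (letter A B)) : Prop := forall l, In l w -> inS l.

Fixpoint trace (u : list (letter A B)) : list (letter A B) :=
  match u with [] => [] | l :: u' => l :: red A B (l :: u') ++ trace u' end.

Ltac dem := repeat match goal with |- context [excluded_middle_informative ?P] =>
  destruct (excluded_middle_informative P) end.

Lemma act_transfer l w : inS l -> allS w -> allS (act A B l w) ->
  act A' B' (phil l) (phiw w) = phiw (act A B l w).
Proof.
  intros Hl Hw Hr.
  destruct l as [a|b]; destruct w as [|[a'|b'] w']; simpl in *.
  - destruct (excluded_middle_informative (a = gone)) as [e|n]; simpl;
    dem; auto; exfalso; [apply n; apply HA1; auto| apply n; apply HA1; auto].
  - assert (Sa' : SA a') by (apply (Hw (inl a')); simpl; auto).
    destruct (excluded_middle_informative (gmul a a' = gone)) as [e|n].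
    + rewrite (HA2 a a' gone Hl Sa' HA3 e), <- (proj1 (HA1 gone HA3) eq_refl).
      dem; [reflexivity| congruence].
    + assert (Sc : SA (gmul a a')) by (apply (Hr (inl (gmul a a'))); simpl; auto).
      rewrite (HA2 a a' _ Hl Sa' Sc eq_refl). dem; [|reflexivity].
      exfalso; apply n; apply HA1; auto.
  - destruct (excluded_middle_informative (a = gone)) as [e|n]; simpl;
    dem; auto; exfalso; [apply n; apply HA1; auto| apply n; apply HA1; auto].
  - destruct (excluded_middle_informative (b = gone)) as [e|n]; simpl;
    dem; auto; exfalso; [apply n; apply HB1; auto| apply n; apply HB1; auto].
  - destruct (excluded_middle_informative (b = gone)) as [e|n]; simpl;
    dem; auto; exfalso; [apply n; apply HB1; auto| apply n; apply HB1; auto].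
  - assert (Sa' : SB b') by (apply (Hw (inr b')); simpl; auto).
    destruct (excluded_middle_informative (gmul b b' = gone)) as [e|n].
    + rewrite (HB2 b b' gone Hl Sa' HB3 e), <- (proj1 (HB1 gone HB3) eq_refl).
      dem; [reflexivity| congruence].
    + assert (Sc : SB (gmul b b')) by (apply (Hr (inr (gmul b b'))); simpl; auto).
      rewrite (HB2 b b' _ Hl Sa' Sc eq_refl). dem; [|reflexivity].
      exfalso; apply n; apply HB1; auto.
Qed.

Lemma red_transfer u : allS (trace u) -> red A' B' (phiw u) = phiw (red A B u).
Proof.
  induction u as [|l u IH]; intro H; simpl; auto.
  assert (H1 : inS l) by (apply H; simpl; auto).
  assert (H2 : allS (red A B (l :: u))) by (intros x Hx; apply H; simpl; right; apply in_app_iff; auto).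
  assert (H3 : allS (trace u)) by (intros x Hx; apply H; simpl; right; apply in_app_iff; auto).
  assert (H4 : allS (red A B u)).
  { destruct u as [|l' u']; [intros x Hx; destruct Hx|].
    intros x Hx. apply H3. simpl. right. apply in_app_iff; auto. }
  change (act A' B' (phil l) (red A' B' (phiw u)) = phiw (act A B l (red A B u))).
  rewrite IH by auto. apply act_transfer; auto.
Qed.

Lemma red_nil_transfer u : allS (trace u) -> (red A B u = [] <-> red A' B' (phiw u) = []).
Proof.
  intro H. rewrite red_transfer by auto. unfold phiw. destruct (red A B u); simpl; split; congruence.
Qed.

End Transfer.

Section PI.
Variables M N : Group.
Variable s : list M.
Variable t : list N.
Hypothesis Hst : PartIso M N s t.

Definition phi (a : M) : N :=
  epsilon (inhabits gone) (fun b => exists i, nth_error s i = Some a /\ nth_error t i = Some b).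

Lemma phi_spec a : In a s -> exists i, nth_error s i = Some a /\ nth_error t i = Some (phi a).
Proof.
  intro Ha. unfold phi. apply epsilon_spec.
  destruct (In_nth_error _ _ Ha) as [i Hi].
  assert (i < length t).
  { destruct Hst as [Hl _]. rewrite <- Hl. apply nth_error_Some. congruence. }
  destruct (nth_error t i) as [y|] eqn:E. - exists y, i; auto.
  - apply nth_error_Some in E; [contradiction | auto].
Qed.

Lemma lt_of_nth {X} (l : list X) i x : nth_error l i = Some x -> i < length l.
Proof. intro H. apply nth_error_Some. congruence. Qed.

Lemma phi_one a : In a s -> (a = gone <-> phi a = gone).
Proof.
  intro Ha. destruct (phi_spec a Ha) as [i [H1 H2]].
  destruct Hst as [_ Hc]. pose proof (lt_of_nth _ _ _ H1) as Li.
  destruct (Hc i i i Li Li Li) as (_ & Q & _).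
  rewrite H1, H2 in Q. split; intro E.
  - subst. assert (Some (phi gone) = Some gone) by (apply Q; auto). congruence.
  - subst. rewrite E in Q. assert (Some a = Some gone) by (apply Q; auto). congruence.
Qed.

Lemma phi_mul a b c : In a s -> In b s -> In c s -> gmul a b = c -> gmul (phi a) (phi b) = phi c.
Proof.
  intros Ha Hb Hc' E.
  destruct (phi_spec a Ha) as [i [H1 H2]].
  destruct (phi_spec b Hb) as [j [H3 H4]].
  destruct (phi_spec c Hc') as [k [H5 H6]].
  destruct Hst as [_ Hc].
  destruct (Hc i j k (lt_of_nth _ _ _ H1) (lt_of_nth _ _ _ H3) (lt_of_nth _ _ _ H5)) as (_ & _ & _ & Q).
  rewrite H1, H2, H3, H4, H5, H6 in Q.
  assert (Some (gmul (phi a) (phi b)) = Some (phi c)) by (apply Q; congruence). congruence.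
Qed.

Lemma phi_inv a : In a s -> In (ginv a) s -> phi (ginv a) = ginv (phi a).
Proof.
  intros Ha Hb.
  destruct (phi_spec a Ha) as [i [H1 H2]].
  destruct (phi_spec (ginv a) Hb) as [j [H3 H4]].
  destruct Hst as [_ Hc].
  destruct (Hc i j i (lt_of_nth _ _ _ H1) (lt_of_nth _ _ _ H3) (lt_of_nth _ _ _ H1)) as (_ & _ & Q & _).
  rewrite H1, H2, H3, H4 in Q. simpl in Q.
  assert (Some (ginv (phi a)) = Some (phi (ginv a))) by (apply Q; auto). congruence.
Qed.

End PI.

Fixpoint atoms (f : qf) : list (term * term) :=
  match f with
  | QEq a b => [(a, b)]
  | QNot g => atoms g
  | QAnd g h => atoms g ++ atoms h
  | QOr g h => atoms g ++ atoms h
  end.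

Fixpoint tvars (t : term) : list nat :=
  match t with
  | TVar n => [n]
  | TOne => []
  | TMul a b => tvars a ++ tvars b
  | TInv a => tvars a
  end.

Lemma sat_transfer (G H : Group) (e1 : nat -> G) (e2 : nat -> H) f :
  (forall p, In p (atoms f) ->
     (eval_term G e1 (fst p) = eval_term G e1 (snd p) <-> eval_term H e2 (fst p) = eval_term H e2 (snd p))) ->
  (sat_qf G e1 f <-> sat_qf H e2 f).
Proof.
  induction f; simpl; intro Hp.
  - apply (Hp (t, t0)). auto.
  - rewrite IHf; tauto.
  - rewrite IHf1, IHf2; [tauto| |]; intros; apply Hp; apply in_app_iff; auto.
  - rewrite IHf1, IHf2; [tauto| |]; intros; apply Hp; apply in_app_iff; auto.
Qed.

Fixpoint wt (A B : Group) (Wv : nat -> list (letter A B)) (t : term) : list (letter A B) :=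
  match t with
  | TVar n => Wv n
  | TOne => []
  | TMul a b => wt A B Wv a ++ wt A B Wv b
  | TInv a => invw A B (wt A B Wv a)
  end.

Lemma eval_wt (A B P : Group) iA iB (HP : IsFreeProduct A B P iA iB) (e : nat -> P) Wv :
  (forall n, evw A B P iA iB (Wv n) = e n) ->
  forall t, eval_term P e t = evw A B P iA iB (wt A B Wv t).
Proof.
  intros HW t; induction t; simpl; auto.
  - rewrite evw_app, IHt1, IHt2; auto.
  - rewrite evw_invw, IHt; auto.
Qed.

Definition lettersA (A B : Group) (w : list (letter A B)) : list A :=
  flat_map (fun l => match l with inl a => [a] | inr _ => [] end) w.
Definition lettersB (A B : Group) (w : list (letter A B)) : list B :=
  flat_map (fun l => match l with inl _ => [] | inr b => [b] end) w.

Lemma lettersA_in (A B : Group) w a : In (inl a) w -> In a (lettersA A B w).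
Proof. intro H. apply in_flat_map. exists (inl a). simpl; auto. Qed.
Lemma lettersB_in (A B : Group) w b : In (inr b) w -> In b (lettersB A B w).
Proof. intro H. apply in_flat_map. exists (inr b). simpl; auto. Qed.

Lemma in_invw (A B : Group) w l : In l (invw A B w) -> exists l', In l' w /\ l = invl A B l'.
Proof.
  induction w as [|x w IH]; simpl; [tauto|].
  intro H. apply in_app_iff in H. destruct H as [H|[H|[]]].
  - destruct (IH H) as [l' [H1 H2]]. exists l'; auto.
  - exists x; auto.
Qed.

Lemma phiw_app (A B A' B' : Group) (fA : A -> A') (fB : B -> B') u v : phiw A B A' B' fA fB (u ++ v) = phiw A B A' B' fA fB u ++ phiw A B A' B' fA fB v.
Proof. apply map_app. Qed.

Lemma phiw_invw (A B A' B' : Group) (fA : A -> A') (fB : B -> B') w :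
  (forall l, In l w -> phil A B A' B' fA fB (invl A B l) = invl A' B' (phil A B A' B' fA fB l)) ->
  phiw A B A' B' fA fB (invw A B w) = invw A' B' (phiw A B A' B' fA fB w).
Proof.
  induction w as [|l w IH]; intro H; simpl; auto.
  rewrite phiw_app, IH by (intros; apply H; simpl; auto). simpl.
  rewrite (H l) by (simpl; auto). reflexivity.
Qed.

Lemma direction (A1 B1 A2 B2 P1 P2 : Group)
  (iA1 : A1 -> P1) (iB1 : B1 -> P1) (iA2 : A2 -> P2) (iB2 : B2 -> P2)
  (HP1 : IsFreeProduct A1 B1 P1 iA1 iB1)
  (HP2 : IsFreeProduct A2 B2 P2 iA2 iB2)
  (HA : FinEmbeds A1 A2) (HB : FinEmbeds B1 B2) f :
  sat_ex P1 f -> sat_ex P2 f.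
Proof.
  intros [e He].
  pose (Wd := fun x : P1 => proj1_sig (constructive_indefinite_description _ (generation _ _ _ _ _ HP1 x))).
  assert (HW : forall x, evw A1 B1 P1 iA1 iB1 (Wd x) = x).
  { intro x. unfold Wd. exact (proj2_sig (constructive_indefinite_description _ (generation _ _ _ _ _ HP1 x))). }
  pose (Wv := fun n => Wd (e n)).
  pose (V := flat_map (fun p => tvars (fst p) ++ tvars (snd p)) (atoms f)).
  pose (U := map (fun p => wt A1 B1 Wv (fst p) ++ invw A1 B1 (wt A1 B1 Wv (snd p))) (atoms f)).
  pose (Lw := flat_map Wv V ++ flat_map (trace A1 B1) U).
  pose (La := lettersA A1 B1 Lw). pose (Lb := lettersB A1 B1 Lw).
  pose (SAl := gone :: La ++ map ginv La). pose (SBl := gone :: Lb ++ map ginv Lb).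
  destruct (HA SAl) as [tA HtA]. destruct (HB SBl) as [tB HtB].
  pose (fA := phi A1 A2 SAl tA). pose (fB := phi B1 B2 SBl tB).
  pose (SA := fun a => In a SAl). pose (SB := fun b => In b SBl).
  assert (HA1 : forall a, SA a -> (a = gone <-> fA a = gone)) by (intros; apply phi_one; auto).
  assert (HB1 : forall b, SB b -> (b = gone <-> fB b = gone)) by (intros; apply phi_one; auto).
  assert (HA2 : forall a a' c, SA a -> SA a' -> SA c -> gmul a a' = c -> gmul (fA a) (fA a') = fA c)
    by (intros; apply phi_mul; auto).
  assert (HB2 : forall a a' c, SB a -> SB a' -> SB c -> gmul a a' = c -> gmul (fB a) (fB a') = fB c)
    by (intros; apply phi_mul; auto).
  assert (HA3 : SA gone) by (left; auto).
  assert (HB3 : SB gone) by (left; auto).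
  pose (pw := phiw A1 B1 A2 B2 fA fB).
  pose (e2 := fun n => evw A2 B2 P2 iA2 iB2 (pw (Wv n))).
  exists e2.
  assert (LwS : forall l, In l Lw -> inS A1 B1 SA SB l).
  { intros [a|b] Hl; simpl; [unfold SA, SAl | unfold SB, SBl]; right; apply in_app_iff; left;
    [apply lettersA_in | apply lettersB_in]; auto. }
  pose (goodl := fun l : letter A1 B1 => match l with
      | inl a => SA a /\ SA (ginv a) | inr b => SB b /\ SB (ginv b) end).
  assert (LwG : forall n l, In n V -> In l (Wv n) -> goodl l).
  { intros n [a|b] Hn Hl; simpl; split.
    - unfold SA, SAl; right; apply in_app_iff; left; apply lettersA_in. apply in_app_iff; left.
      apply in_flat_map; eauto.
    - unfold SA, SAl; right; apply in_app_iff; right; apply in_map. apply lettersA_in. apply in_app_iff; left.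
      apply in_flat_map; eauto.
    - unfold SB, SBl; right; apply in_app_iff; left; apply lettersB_in. apply in_app_iff; left.
      apply in_flat_map; eauto.
    - unfold SB, SBl; right; apply in_app_iff; right; apply in_map. apply lettersB_in. apply in_app_iff; left.
      apply in_flat_map; eauto. }
  assert (GoodInv : forall l, goodl l -> goodl (invl A1 B1 l)).
  { intros [a|b]; simpl; rewrite inv_inv; tauto. }
  assert (GoodPhi : forall l, goodl l -> phil A1 B1 A2 B2 fA fB (invl A1 B1 l) = invl A2 B2 (phil A1 B1 A2 B2 fA fB l)).
  { intros [a|b] [G1 G2]; simpl; f_equal; apply phi_inv; auto. }
  assert (WtGood : forall t, (forall n, In n (tvars t) -> In n V) -> forall l, In l (wt A1 B1 Wv t) -> goodl l).
  { induction t; simpl; intros Hv l Hl.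
    - eapply LwG; eauto.
    - destruct Hl.
    - apply in_app_iff in Hl. destruct Hl; [apply IHt1 | apply IHt2]; auto;
      intros; apply Hv; apply in_app_iff; auto.
    - destruct (in_invw _ _ _ _ Hl) as [l' [H1 H2]]. subst. apply GoodInv. apply IHt; auto. }
  assert (Ev2 : forall t, (forall n, In n (tvars t) -> In n V) ->
             eval_term P2 e2 t = evw A2 B2 P2 iA2 iB2 (pw (wt A1 B1 Wv t))).
  { induction t; simpl; intro Hv; auto.
    - unfold pw. rewrite phiw_app, evw_app, IHt1, IHt2; auto;
      intros; apply Hv; apply in_app_iff; auto.
    - unfold pw in *. rewrite phiw_invw, evw_invw, IHt; auto.
      intros l Hl. apply GoodPhi. apply WtGood with t; auto. }
  revert He. apply sat_transfer.
  intros [t t'] Hp. simpl.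
  assert (Vt : forall n, In n (tvars t) -> In n V)
    by (intros; apply in_flat_map; exists (t, t'); simpl; split; auto; apply in_app_iff; auto).
  assert (Vt' : forall n, In n (tvars t') -> In n V)
    by (intros; apply in_flat_map; exists (t, t'); simpl; split; auto; apply in_app_iff; auto).
  rewrite (Ev2 t Vt), (Ev2 t' Vt').
  rewrite !(eval_wt _ _ _ _ _ HP1 e Wv) by (intro; apply HW).
  rewrite <- (mul_inv_one P1), <- (mul_inv_one P2).
  rewrite <- evw_invw, <- evw_app by auto.
  rewrite <- evw_invw, <- evw_app by auto.
  rewrite normal_form, normal_form by auto.
  assert (E : invw A2 B2 (pw (wt A1 B1 Wv t')) = pw (invw A1 B1 (wt A1 B1 Wv t'))).
  { unfold pw. rewrite phiw_invw; auto. intros l Hl. apply GoodPhi. apply WtGood with t'; auto. }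
  rewrite E. unfold pw. rewrite <- phiw_app.
  symmetry; apply (red_nil_transfer A1 B1 A2 B2 fA fB SA SB HA1 HB1 HA2 HB2 HA3 HB3).
  intros l Hl. apply LwS. apply in_app_iff; right. apply in_flat_map.
  exists (wt A1 B1 Wv t ++ invw A1 B1 (wt A1 B1 Wv t')). split; auto.
  apply in_map_iff. exists (t, t'). auto.
Qed.

Theorem mainTheorem6 (A1 B1 A2 B2 P1 P2 : Group)
  (iA1 : A1 -> P1) (iB1 : B1 -> P1) (iA2 : A2 -> P2) (iB2 : B2 -> P2)
  (HP1 : IsFreeProduct A1 B1 P1 iA1 iB1)
  (HP2 : IsFreeProduct A2 B2 P2 iA2 iB2)
  (Hcap1 : forall a b, iA1 a = iB1 b -> iA1 a = gone)
  (Hcap2 : forall a b, iA2 a = iB2 b -> iA2 a = gone)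
  (HA : FEquiv A1 A2) (HB : FEquiv B1 B2) :
  ExEquiv P1 P2.
Proof.
  intro f. split.
  - apply (direction A1 B1 A2 B2 P1 P2 iA1 iB1 iA2 iB2 HP1 HP2 (proj1 HA) (proj1 HB)).
  - apply (direction A2 B2 A1 B1 P2 P1 iA2 iB2 iA1 iB1 HP2 HP1 (proj2 HA) (proj2 HB)).
Qed.
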